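(* Let $\bm X\in\mathbb{R}_+^{m\times n}$, let $(\bm W^k,\bm H^k)\in\mathbb{R}_{++}^{m\times r}\times\mathbb{R}_{++}^{r\times n}$, and let $\phi$ and $\hat f_k$ be as defined below. Then for any $L_k>0$ with $$L_k\ge\max\Big\{\max_{i\in[m],l\in[r]}\sum_{j=1}^n\alpha^k_{ilj}X_{ij},\ \max_{l\in[r],j\in[n]}\sum_{i=1}^m\alpha^k_{ilj}X_{ij},\ m,\ n\Big\},$$ both $L_k\phi-\hat f_k$ and $L_k\phi+\hat f_k$ are convex on $\mathbb{R}_{++}^{m\times r}\times\mathbb{R}_{++}^{r\times n}$, i.e. $(\hat f_k,\phi)$ is $L_k$-smad there. Consequently, for every $L\ge\max\{\max_i\sum_jX_{ij},\ \max_j\sum_iX_{ij},\ m,\ n\}$, the pair $(\hat f_k,\phi)$ is $L$-smad on $\mathbb{R}_{++}^{m\times r}\times\mathbb{R}_{++}^{r\times n}$ for every $k$ and every choice of $(\bm W^k,\bm H^k)$.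
   Context: $[n]=\{1,\dots,n\}$. Kernel: $\phi(\bm W,\bm H)=\sum_{i=1}^m\sum_{l=1}^r\big(-\log W_{il}+\tfrac12W_{il}^2\big)+\sum_{l=1}^r\sum_{j=1}^n\big(-\log H_{lj}+\tfrac12H_{lj}^2\big)$, with domain $\mathbb{R}_{++}^{m\times r}\times\mathbb{R}_{++}^{r\times n}$. Given $(\bm W^k,\bm H^k)$ with positive entries, $\alpha^k_{ilj}=\frac{W^k_{il}H^k_{lj}}{\sum_{l'=1}^rW^k_{il'}H^k_{l'j}}$ and $\hat f_k(\bm W,\bm H)=\sum_{i,j}\Big(X_{ij}\log X_{ij}-X_{ij}\sum_{l=1}^r\alpha^k_{ilj}\log\frac{W_{il}H_{lj}}{\alpha^k_{ilj}}-X_{ij}+(\bm W\bm H)_{ij}\Big)$ (convention $0\log0=0$). A pair $(h,\phi)$ is $L$-smad on an open convex set $C$ if $L\phi-h$ and $L\phi+h$ are convex on $C$. *)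

(* Defs.v *)
From mathcomp Require Import all_boot all_order all_algebra.
From mathcomp Require Import all_classical all_reals.
From mathcomp Require Import exp.
Set Implicit Arguments. Unset Strict Implicit. Unset Printing Implicit Defensive.
Import Order.TTheory GRing.Theory Num.Theory.
Local Open Scope ring_scope.

Section Defs.
Variable R : realType.

Definition pt (m r n : nat) := ('M[R]_(m, r) * 'M[R]_(r, n))%type.

Definition posmx (p q : nat) (A : 'M[R]_(p, q)) : Prop := forall i j, 0 < A i j.

Definition posdom (m r n : nat) (x : pt m r n) : Prop := posmx x.1 /\ posmx x.2.

Definition comb (m r n : nat) (t : R) (x y : pt m r n) : pt m r n :=
  (t *: x.1 + (1 - t) *: y.1, t *: x.2 + (1 - t) *: y.2).

Definition convex_on (m r n : nat) (C : pt m r n -> Prop) (f : pt m r n -> R) : Prop :=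
  forall (x y : pt m r n) (t : R), C x -> C y -> 0 <= t -> t <= 1 ->
    f (comb t x y) <= t * f x + (1 - t) * f y.

Definition smad (m r n : nat) (L : R) (h phi : pt m r n -> R) (C : pt m r n -> Prop) : Prop :=
  convex_on C (fun x => L * phi x - h x) /\ convex_on C (fun x => L * phi x + h x).

Definition kernel_phi (m r n : nat) (x : pt m r n) : R :=
  \sum_(i < m) \sum_(l < r) (- ln (x.1 i l) + (x.1 i l) ^+ 2 / 2)
  + \sum_(l < r) \sum_(j < n) (- ln (x.2 l j) + (x.2 l j) ^+ 2 / 2).

Definition xlogx (a : R) : R := if a == 0 then 0 else a * ln a.

Definition alpha (m r n : nat) (Wk : 'M[R]_(m, r)) (Hk : 'M[R]_(r, n))
  (i : 'I_m) (l : 'I_r) (j : 'I_n) : R :=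
  Wk i l * Hk l j / (\sum_(l' < r) Wk i l' * Hk l' j).

Definition fhat (m r n : nat) (X : 'M[R]_(m, n)) (Wk : 'M[R]_(m, r)) (Hk : 'M[R]_(r, n))
  (x : pt m r n) : R :=
  \sum_(i < m) \sum_(j < n)
    (xlogx (X i j)
     - X i j * \sum_(l < r) alpha Wk Hk i l j
                 * ln (x.1 i l * x.2 l j / alpha Wk Hk i l j)
     - X i j + (x.1 *m x.2) i j).

End Defs.

(* Main.v *)
Require Import Defs.
From mathcomp Require Import all_boot all_order all_algebra.
From mathcomp Require Import all_classical all_reals.
From mathcomp Require Import exp.
From mathcomp Require Import ring lra.
Import Order.TTheory GRing.Theory Num.Theory.
Local Open Scope ring_scope.

Section S.
Variable R : realType.

Lemma ln_le_sub1 {u : R} : 0 < u -> ln u <= u - 1.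
Proof. move=> u0; have := expR_ge1Dx (ln u); rewrite lnK ?posrE //; lra. Qed.

Lemma nln_convex (t u v : R) : 0 < u -> 0 < v -> 0 <= t -> t <= 1 ->
  - ln (t * u + (1 - t) * v) <= t * (- ln u) + (1 - t) * (- ln v).
Proof.
move=> u0 v0 t0 t1.
have z0 : 0 < t * u + (1 - t) * v.
  case: (ltrP 0 t) => tp.
    have h1 := mulr_gt0 tp u0.
    have h2 : 0 <= (1 - t) * v by apply: mulr_ge0; [lra| exact: ltW].
    lra.
  have -> : t = 0 by lra.
  by rewrite mul0r add0r subr0 mul1r.
set z := t * u + (1 - t) * v in z0 *.
have h1 := ln_le_sub1 (divr_gt0 u0 z0).
have h2 := ln_le_sub1 (divr_gt0 v0 z0).
rewrite ln_div ?posrE // in h1; rewrite ln_div ?posrE // in h2.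
have e : t * (u / z) + (1 - t) * (v / z) = 1.
  by rewrite /z; field; apply/lt0r_neq0.
have k1 := ler_wpM2l t0 h1.
have k2 : (1 - t) * (ln v - ln z) <= (1 - t) * (v / z - 1).
  by apply: ler_wpM2l => //; lra.
nra.
Qed.

Section Cv.
Variables m r n : nat.
Notation C := (@posdom R m r n).
Implicit Types (x y : pt R m r n) (f g : pt R m r n -> R).

Lemma comb1 t x y i l : (comb t x y).1 i l = t * x.1 i l + (1 - t) * y.1 i l.
Proof. by rewrite /comb /= !mxE. Qed.
Lemma comb2 t x y i l : (comb t x y).2 i l = t * x.2 i l + (1 - t) * y.2 i l.
Proof. by rewrite /comb /= !mxE. Qed.

Lemma pos_comb (t u v : R) : 0 < u -> 0 < v -> 0 <= t -> t <= 1 ->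
  0 < t * u + (1 - t) * v.
Proof.
move=> u0 v0 t0 t1; case: (ltrP 0 t) => tp.
  have h1 := mulr_gt0 tp u0.
  have h2 : 0 <= (1 - t) * v by apply: mulr_ge0; [lra| exact: ltW].
  lra.
have -> : t = 0 by lra.
by rewrite mul0r add0r subr0 mul1r.
Qed.

Lemma posdom_comb t x y : C x -> C y -> 0 <= t -> t <= 1 -> C (comb t x y).
Proof.
move=> [x1 x2] [y1 y2] t0 t1; split=> i j;
  rewrite ?comb1 ?comb2; exact: pos_comb.
Qed.

Lemma cv_add f g : convex_on C f -> convex_on C g -> convex_on C (fun x => f x + g x).
Proof.
move=> hf hg x y t cx cy t0 t1.
have := hf x y t cx cy t0 t1; have := hg x y t cx cy t0 t1; lra.
Qed.

Lemma cv_scale (c : R) f : 0 <= c -> convex_on C f -> convex_on C (fun x => c * f x).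
Proof.
move=> c0 hf x y t cx cy t0 t1.
have := ler_wpM2l c0 (hf x y t cx cy t0 t1); lra.
Qed.

Lemma cv_const (c : R) : convex_on C (fun _ => c).
Proof. move=> x y t _ _ _ _; lra. Qed.

Lemma cv_sum (I : finType) (F : I -> pt R m r n -> R) :
  (forall i, convex_on C (F i)) -> convex_on C (fun x => \sum_i F i x).
Proof.
move=> hF x y t cx cy t0 t1.
rewrite !mulr_sumr -big_split /=; apply: ler_sum => i _.
exact: hF.
Qed.

Lemma cv_ext f g : (forall x, C x -> f x = g x) -> convex_on C g -> convex_on C f.
Proof.
move=> e hg x y t cx cy t0 t1.
by rewrite !e //; [exact: hg| exact: posdom_comb].
Qed.

Lemma cv_nlnW i l : convex_on C (fun x => - ln (x.1 i l)).
Proof. move=> x y t [x1 _] [y1 _] t0 t1; rewrite comb1; exact: nln_convex. Qed.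
Lemma cv_nlnH i l : convex_on C (fun x => - ln (x.2 i l)).
Proof. move=> x y t [_ x1] [_ y1] t0 t1; rewrite comb2; exact: nln_convex. Qed.

Lemma cv_sq g : (forall t x y, g (comb t x y) = t * g x + (1 - t) * g y) ->
  convex_on C (fun x => g x ^+ 2).
Proof.
move=> hg x y t _ _ t0 t1; rewrite hg.
have : 0 <= t * (1 - t) * (g x - g y) ^+ 2.
  by apply: mulr_ge0; [apply: mulr_ge0; lra| exact: sqr_ge0].
nra.
Qed.

End Cv.

Section Main.
Variables (m r n : nat) (X : 'M[R]_(m, n)) (Wk : 'M[R]_(m, r)) (Hk : 'M[R]_(r, n)).
Hypotheses (PW : posmx Wk) (PH : posmx Hk).
Notation al := (alpha Wk Hk).

Lemma al_gt0 i l j : 0 < al i l j.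
Proof.
rewrite /alpha; apply: divr_gt0; first exact: mulr_gt0.
rewrite (bigD1 l) //=.
have h1 := mulr_gt0 (PW i l) (PH l j).
have h2 : 0 <= \sum_(l' < r | l' != l) Wk i l' * Hk l' j.
  by apply: sumr_ge0 => l' _; apply: mulr_ge0; apply: ltW.
lra.
Qed.

Lemma al_le1 i l j : al i l j <= 1.
Proof.
rewrite /alpha.
have h1 := mulr_gt0 (PW i l) (PH l j).
have h2 : 0 <= \sum_(l' < r | l' != l) Wk i l' * Hk l' j.
  by apply: sumr_ge0 => l' _; apply: mulr_ge0; apply: ltW.
rewrite (bigD1 l) //= ler_pdivrMr; lra.
Qed.

Definition aa i l := \sum_(j < n) al i l j * X i j.
Definition bb l j := \sum_(i < m) al i l j * X i j.
Definition KK := \sum_(i < m) \sum_(j < n)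
   (xlogx (X i j) - X i j + X i j * \sum_(l < r) al i l j * ln (al i l j)).

Lemma E1 (x : pt R m r n) : posdom x ->
  fhat X Wk Hk x = KK + \sum_(i < m) \sum_(l < r) aa i l * - ln (x.1 i l)
    + \sum_(l < r) \sum_(j < n) bb l j * - ln (x.2 l j)
    + \sum_(i < m) \sum_(j < n) \sum_(l < r) x.1 i l * x.2 l j.
Proof.
move=> [x1 x2].
have step : fhat X Wk Hk x = \sum_(i < m) \sum_(j < n)
   ((xlogx (X i j) - X i j + X i j * \sum_(l < r) al i l j * ln (al i l j))
    + \sum_(l < r) X i j * al i l j * - ln (x.1 i l)
    + \sum_(l < r) X i j * al i l j * - ln (x.2 l j)
    + \sum_(l < r) x.1 i l * x.2 l j).
  apply: eq_bigr => i _; apply: eq_bigr => j _.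
  rewrite mxE.
  have -> : \sum_(l < r) al i l j * ln (x.1 i l * x.2 l j / al i l j) =
     \sum_(l < r) al i l j * ln (x.1 i l) + \sum_(l < r) al i l j * ln (x.2 l j)
     - \sum_(l < r) al i l j * ln (al i l j).
    rewrite -big_split -sumrB /=; apply: eq_bigr => l _.
    have ha := al_gt0 i l j; have hx := mulr_gt0 (x1 i l) (x2 l j).
    rewrite ln_div ?posrE // lnM ?posrE //; ring.
  have -> : \sum_(l < r) X i j * al i l j * - ln (x.1 i l) =
     - (X i j * \sum_(l < r) al i l j * ln (x.1 i l)).
    by rewrite mulr_sumr -sumrN; apply: eq_bigr => l _; ring.
  have -> : \sum_(l < r) X i j * al i l j * - ln (x.2 l j) =
     - (X i j * \sum_(l < r) al i l j * ln (x.2 l j)).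
    by rewrite mulr_sumr -sumrN; apply: eq_bigr => l _; ring.
  ring.
rewrite step.
under eq_bigr => i _ do rewrite !big_split /=.
rewrite !big_split /=.
congr (_ + _ + _ + _).
- by rewrite /KK -!big_split /=; apply: eq_bigr => i _; rewrite -!big_split.
- rewrite /aa; apply: eq_bigr => i _.
  rewrite exchange_big /=; apply: eq_bigr => l _.
  by rewrite mulr_suml; apply: eq_bigr => j _; ring.
- rewrite /bb.
  under eq_bigr => i _ do rewrite exchange_big /=.
  rewrite exchange_big /=; apply: eq_bigr => l _.
  rewrite exchange_big /=; apply: eq_bigr => j _.
  by rewrite mulr_suml; apply: eq_bigr => i _; ring.
Qed.


Definition QW (x : pt R m r n) := \sum_(i < m) \sum_(l < r) x.1 i l ^+ 2 / 2.
Definition QH (x : pt R m r n) := \sum_(l < r) \sum_(j < n) x.2 l j ^+ 2 / 2.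
Definition BB (x : pt R m r n) := \sum_(i < m) \sum_(j < n) \sum_(l < r) x.1 i l * x.2 l j.

Lemma Ephi (x : pt R m r n) : kernel_phi x =
  \sum_(i < m) \sum_(l < r) - ln (x.1 i l) + QW x
  + (\sum_(l < r) \sum_(j < n) - ln (x.2 l j) + QH x).
Proof.
rewrite /kernel_phi /QW /QH; congr (_ + _).
  by under eq_bigr => i _ do rewrite big_split; rewrite big_split.
by under eq_bigr => i _ do rewrite big_split; rewrite big_split.
Qed.

Lemma E3 (e : R) (x : pt R m r n) : e * e = 1 ->
  \sum_(i < m) \sum_(j < n) \sum_(l < r) (x.1 i l + e * x.2 l j) ^+ 2 / 2
  = n%:R * QW x + e * BB x + m%:R * QH x.
Proof.
move=> he.
have h (a b : R) : (a + e * b) ^+ 2 / 2 = a ^+ 2 / 2 + e * (a * b) + b ^+ 2 / 2.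
  have -> : (a + e * b) ^+ 2 / 2 = a ^+ 2 / 2 + e * (a * b) + (e * e) * (b ^+ 2 / 2)
    by field.
  by rewrite he mul1r.
have T1 : \sum_(i < m) \sum_(j < n) \sum_(l < r) x.1 i l ^+ 2 / 2 = n%:R * QW x.
  rewrite /QW mulr_sumr; apply: eq_bigr => i _.
  rewrite exchange_big mulr_sumr; apply: eq_bigr => l _.
  by rewrite sumr_const card_ord mulr_natl.
have T2 : \sum_(i < m) \sum_(j < n) \sum_(l < r) x.2 l j ^+ 2 / 2 = m%:R * QH x.
  by rewrite sumr_const card_ord /QH exchange_big mulr_natl.
rewrite -T1 -T2 /BB mulr_sumr -!big_split /=; apply: eq_bigr => i _.
rewrite mulr_sumr -!big_split /=; apply: eq_bigr => j _.
rewrite mulr_sumr -!big_split /=; apply: eq_bigr => l _.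
exact: h.
Qed.

Lemma sum2_lin (I J : finType) (c d : R) (A F : I -> J -> R) :
  \sum_i \sum_j (c + d * A i j) * F i j =
  c * \sum_i \sum_j F i j + d * \sum_i \sum_j A i j * F i j.
Proof.
rewrite !mulr_sumr -big_split; apply: eq_bigr => i _ /=.
rewrite !mulr_sumr -big_split; apply: eq_bigr => j _ /=; ring.
Qed.

Lemma cv_half (f : pt R m r n -> R) : convex_on (@posdom R m r n) f ->
  convex_on (@posdom R m r n) (fun x => f x / 2).
Proof.
move=> hf; apply: (@cv_ext _ _ _ _ (fun x => 2^-1 * f x)) => [x _|]; first by rewrite mulrC.
by apply: cv_scale => //; rewrite invr_ge0.
Qed.

Lemma main_e (L e : R) : e * e = 1 ->
  (forall i l, 0 <= L + e * aa i l) -> (forall l j, 0 <= L + e * bb l j) ->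
  n%:R <= L -> m%:R <= L ->
  convex_on (@posdom R m r n) (fun x => L * kernel_phi x + e * fhat X Wk Hk x).
Proof.
move=> he ha hb hn hm.
apply: (@cv_ext _ _ _ _ (fun x =>
  \sum_(i < m) \sum_(l < r) (L + e * aa i l) * - ln (x.1 i l)
  + \sum_(l < r) \sum_(j < n) (L + e * bb l j) * - ln (x.2 l j)
  + (L - n%:R) * QW x + (L - m%:R) * QH x
  + \sum_(i < m) \sum_(j < n) \sum_(l < r) (x.1 i l + e * x.2 l j) ^+ 2 / 2
  + e * KK)).
  move=> x cx; rewrite E1 // Ephi E3 // !sum2_lin -/(BB x); ring.
apply: cv_add; last exact: cv_const.
apply: cv_add; last first.
  apply: cv_sum => i; apply: cv_sum => j; apply: cv_sum => l; apply: cv_half.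
  by apply: (@cv_sq _ _ _ (fun x => x.1 i l + e * x.2 l j)) => t x y;
    rewrite comb1 comb2; ring.
apply: cv_add; last by apply: cv_scale; [lra| apply: cv_sum => l;
  apply: cv_sum => j; apply: cv_half; apply: (@cv_sq _ _ _ (fun x => x.2 l j)) => t x y;
  rewrite comb2].
apply: cv_add; last by apply: cv_scale; [lra| apply: cv_sum => i;
  apply: cv_sum => l; apply: cv_half; apply: (@cv_sq _ _ _ (fun x => x.1 i l)) => t x y;
  rewrite comb1].
apply: cv_add.
  by apply: cv_sum => i; apply: cv_sum => l; apply: cv_scale => //; apply: cv_nlnW.
by apply: cv_sum => l; apply: cv_sum => j; apply: cv_scale => //; apply: cv_nlnH.
Qed.


Lemma smad_gen (L : R) : (forall i j, 0 <= X i j) -> 0 <= L ->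
  (forall i l, aa i l <= L) -> (forall l j, bb l j <= L) ->
  m%:R <= L -> n%:R <= L ->
  smad L (fhat X Wk Hk) (@kernel_phi R m r n) (@posdom R m r n).
Proof.
move=> X0 L0 ha hb hm hn.
have aa0 i l : 0 <= aa i l.
  by apply: sumr_ge0 => j _; apply: mulr_ge0; [apply: ltW; apply: al_gt0| apply: X0].
have bb0 l j : 0 <= bb l j.
  by apply: sumr_ge0 => i _; apply: mulr_ge0; [apply: ltW; apply: al_gt0| apply: X0].
split.
  apply: (@cv_ext _ _ _ _ (fun x => L * kernel_phi x + (-1) * fhat X Wk Hk x)).
    by move=> x _; rewrite mulN1r.
  apply: main_e => //; first by rewrite mulN1r opprK.
    by move=> i l; have := ha i l; lra.
  by move=> l j; have := hb l j; lra.
apply: (@cv_ext _ _ _ _ (fun x => L * kernel_phi x + 1 * fhat X Wk Hk x)).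
  by move=> x _; rewrite mul1r.
apply: main_e => //; first by rewrite mul1r.
  by move=> i l; have := aa0 i l; lra.
by move=> l j; have := bb0 l j; lra.
Qed.

End Main.
End S.

Theorem mainTheorem6 (R : realType) (m r n : nat) (X : 'M[R]_(m, n)) :
  (forall i j, 0 <= X i j) ->
  (forall (Wk : 'M[R]_(m, r)) (Hk : 'M[R]_(r, n)) (Lk : R),
     posmx Wk -> posmx Hk -> 0 < Lk ->
     (forall (i : 'I_m) (l : 'I_r), \sum_(j < n) alpha Wk Hk i l j * X i j <= Lk) ->
     (forall (l : 'I_r) (j : 'I_n), \sum_(i < m) alpha Wk Hk i l j * X i j <= Lk) ->
     m%:R <= Lk -> n%:R <= Lk ->
     smad Lk (fhat X Wk Hk) (@kernel_phi R m r n) (@posdom R m r n)) /\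
  (forall L : R,
     (forall i : 'I_m, \sum_(j < n) X i j <= L) ->
     (forall j : 'I_n, \sum_(i < m) X i j <= L) ->
     m%:R <= L -> n%:R <= L ->
     forall (Wk : 'M[R]_(m, r)) (Hk : 'M[R]_(r, n)), posmx Wk -> posmx Hk ->
       smad L (fhat X Wk Hk) (@kernel_phi R m r n) (@posdom R m r n)).
Proof.
move=> X0; split.
  move=> Wk Hk Lk PW PH L0 h1 h2 hm hn.
  by apply: smad_gen => //; apply: ltW.
move=> L h1 h2 hm hn Wk Hk PW PH.
have L0 : 0 <= L by apply: le_trans hm; apply: ler0n.
apply: smad_gen => //.
  move=> i l; apply: le_trans (h1 i); apply: ler_sum => j _.
  have := @al_le1 R m r n Wk Hk PW PH i l j; have := X0 i j; nra.
move=> l j; apply: le_trans (h2 j); apply: ler_sum => i _.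
have := @al_le1 R m r n Wk Hk PW PH i l j; have := X0 i j; nra.
Qed.
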